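(* Let $\mathcal{A}\colon\mathbb{S}^n\to\mathbb{R}^p$ and $\mathcal{B}\colon\mathbb{S}^n\to\mathbb{R}^q$ be linear, $a\in\mathbb{R}^p$, $b\in\mathbb{R}^q$, and $\mathcal{C}:=\{X\in\mathbb{S}^n_+ : \mathcal{A}(X)=a,\ \mathcal{B}(X)\le b\}$. Suppose $\mathcal{C}\cap\mathbb{S}^n_{++}\neq\emptyset$. Let $\bar X\in\mathcal{C}$ and let $P$ denote the orthogonal projection of $\mathbb{R}^q$ onto $\{z\in\mathbb{R}^q : \operatorname{supp}(z)\cap\operatorname{supp}(\mathcal{B}(\bar X)-b)=\emptyset\}$. Then \[ \dim N_{\mathcal{C}}(\bar X) = \dim(\mathbb{S}^n) - \dim\Bigl(\operatorname{Null}(\mathcal{A})\cap\operatorname{Null}(P\circ\mathcal{B})\cap \operatorname{span}\{\tfrac12(\bar X uv^{\mathsf T}+vu^{\mathsf T}\bar X) : u,v\in\mathbb{R}^n\}\Bigr). \] In particular, if $\bar X=\bar x\bar x^{\mathsf T}$ for some nonzero $\bar x\in\mathbb{R}^n$, then, with $A_i:=\mathcal{A}^*(e_i)$ for $i\in[p]$ and $B_i:=\mathcal{B}^*(e_i)$ for $i\in[q]$, \[ \dim N_{\mathcal{C}}(\bar x\bar x^{\mathsf T}) = \dim(\mathbb{S}^n) - \dim\Bigl(\bigl(\{A_i\bar x : i\in[p]\}\cup\{B_i\bar x : i\in[q]\setminus\operatorname{supp}(\mathcal{B}(\bar x\bar x^{\mathsf T})-b)\}\bigr)^{\perp}\Bigr);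 \] thus $\bar x\bar x^{\mathsf T}\in\mathcal{C}$ is a vertex of $\mathcal{C}$ if and only if $\{A_i\bar x : i\in[p]\}\cup\{B_i\bar x : i\in[q]\setminus\operatorname{supp}(\mathcal{B}(\bar x\bar x^{\mathsf T})-b)\}$ spans $\mathbb{R}^n$.
   Context: $\mathbb{S}^n$ is the space of real symmetric $n\times n$ matrices with trace inner product; $\mathbb{S}^n_+$, $\mathbb{S}^n_{++}$ are the positive semidefinite and positive definite cones. $\operatorname{supp}(z)=\{i:z_i\neq0\}$; $e_i$ are standard basis vectors. For a convex set $\mathcal{C}$ and $\bar X\in\mathcal{C}$, $N_{\mathcal{C}}(\bar X):=\{C\in\mathbb{S}^n : \langle C,X\rangle\le\langle C,\bar X\rangle\ \forall X\in\mathcal{C}\}$; $\bar X$ is a vertex of $\mathcal{C}$ if $\dim N_{\mathcal{C}}(\bar X)=\dim\mathbb{S}^n$. *)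

(* Defs.v *)
From HB Require Import structures.
From mathcomp Require Import all_boot all_order all_algebra.
From mathcomp Require Import boolp classical_sets reals.
Set Implicit Arguments. Unset Strict Implicit. Unset Printing Implicit Defensive.
Import Order.TTheory GRing.Theory Num.Theory.
Local Open Scope ring_scope.
Local Open Scope classical_set_scope.

Section Defs.
Variable R : realType.

Definition lin_span (vT : vectType R) (S : set vT) : set vT :=
  [set v | exists s : seq vT, (forall x, x \in s -> S x) /\ (v \in <<s>>%VS)].

(* dimension of (the linear span of) a set = max number of linearly
   independent elements of the set *)
Definition dim_set (vT : vectType R) (S : set vT) : nat :=
  (\max_(k < (\dim (fullv : {vspace vT})).+1 |
      `[< exists s : k.-tuple vT, (forall x, x \in s -> S x) /\ free s >]) k)%N.

Variable n : nat.

Definition Sym : set 'M[R]_n := [set X | X^T = X].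

Definition inner (C X : 'M[R]_n) : R := \tr (C^T *m X).

Definition psd (X : 'M[R]_n) : Prop :=
  X^T = X /\ forall v : 'cV[R]_n, 0 <= (v^T *m X *m v) 0 0.
Definition pd (X : 'M[R]_n) : Prop :=
  X^T = X /\ forall v : 'cV[R]_n, v != 0 -> 0 < (v^T *m X *m v) 0 0.

Definition normal_cone (C : set 'M[R]_n) (Xbar : 'M[R]_n) : set 'M[R]_n :=
  [set Y | Sym Y /\ forall X, C X -> inner Y X <= inner Y Xbar].

Definition is_vertex (C : set 'M[R]_n) (Xbar : 'M[R]_n) : Prop :=
  C Xbar /\ dim_set (normal_cone C Xbar) = dim_set Sym.

(* A linear map S^n -> R^m given through its adjoint images M_i = A^*(e_i):
   (A X)_i = <M_i, X> *)
Definition lmap (m : nat) (M : 'I_m -> 'M[R]_n) (X : 'M[R]_n) : 'I_m -> R :=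
  fun i => inner (M i) X.

Definition supp (m : nat) (z : 'I_m -> R) : set 'I_m := [set i | z i != 0].

Definition feas (p q : nat) (A : 'I_p -> 'M[R]_n) (a : 'I_p -> R)
  (B : 'I_q -> 'M[R]_n) (b : 'I_q -> R) : set 'M[R]_n :=
  [set X | psd X /\ lmap A X = a /\ forall i, lmap B X i <= b i].

(* orthogonal projection of R^q onto {z | supp z \cap S = empty} *)
Definition proj_off (q : nat) (S : set 'I_q) (z : 'I_q -> R) : 'I_q -> R :=
  fun i => if `[< S i >] then 0 else z i.

Definition null_of (m : nat) (f : 'M[R]_n -> ('I_m -> R)) : set 'M[R]_n :=
  [set X | Sym X /\ f X = (fun=> 0)].

Definition gens (Xbar : 'M[R]_n) : set 'M[R]_n :=
  [set Y | exists u v : 'cV[R]_n,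
     Y = 2^-1 *: (Xbar *m (u *m v^T) + v *m u^T *m Xbar)].

Definition orth (T : set 'cV[R]_n) : set 'cV[R]_n :=
  [set v | forall t, T t -> (v^T *m t) 0 0 = 0].

End Defs.

(* Main.v *)
Require Import Defs.
From HB Require Import structures.
From mathcomp Require Import all_boot all_order all_algebra.
From mathcomp Require Import boolp classical_sets reals.
Import Order.TTheory GRing.Theory Num.Theory.
Local Open Scope ring_scope.
Local Open Scope classical_set_scope.
From mathcomp Require Import ring lra zify.

Set Implicit Arguments. Unset Strict Implicit. Unset Printing Implicit Defensive.


Section GenA.
Variable R : realType.

Lemma lfunE' (aT rT : vectType R) (f : aT -> rT) :
  (forall a x y, f (a *: x + y) = a *: f x + f y) -> forall x, linfun f x = f x.
Proof.
move=> H x.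
pose g : {linear aT -> rT} := HB.pack f (GRing.isLinear.Build _ _ _ _ f H).
exact: (lfunE g).
Qed.

Definition ip (m k : nat) (X Y : 'M[R]_(m, k)) : R := \tr (X^T *m Y).

Lemma ipC m k (X Y : 'M[R]_(m, k)) : ip X Y = ip Y X.
Proof. by rewrite /ip -mxtrace_tr trmx_mul trmxK. Qed.

Lemma ipDZr m k (X Y Z : 'M[R]_(m, k)) a : ip X (a *: Y + Z) = a * ip X Y + ip X Z.
Proof. by rewrite /ip mulmxDr -scalemxAr mxtraceD mxtraceZ. Qed.

Lemma ipDZl m k (X Y Z : 'M[R]_(m, k)) a : ip (a *: Y + Z) X = a * ip Y X + ip Z X.
Proof. by rewrite ipC ipDZr ![ip X _]ipC. Qed.

Lemma ip0r m k (X : 'M[R]_(m, k)) : ip X 0 = 0.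
Proof. by rewrite /ip mulmx0 mxtrace0. Qed.

Lemma ip0l m k (X : 'M[R]_(m, k)) : ip 0 X = 0.
Proof. by rewrite ipC ip0r. Qed.

Lemma ipE m k (X Y : 'M[R]_(m, k)) : ip X Y = \sum_j \sum_i X i j * Y i j.
Proof. by rewrite /ip /mxtrace; apply: eq_bigr => j _; rewrite mxE; apply: eq_bigr => i _; rewrite mxE. Qed.

Lemma ipxx_ge0 m k (X : 'M[R]_(m, k)) : 0 <= ip X X.
Proof. by rewrite ipE; apply: sumr_ge0 => j _; apply: sumr_ge0 => i _; rewrite -expr2 sqr_ge0. Qed.

Lemma ipxx_eq0 m k (X : 'M[R]_(m, k)) : ip X X = 0 -> X = 0.
Proof.
rewrite ipE => /eqP; rewrite psumr_eq0; last first.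
  by move=> j _; apply: sumr_ge0 => i _; rewrite -expr2 sqr_ge0.
move=> /allP H; apply/matrixP => i j; rewrite mxE.
have := H j (mem_index_enum _); rewrite /= psumr_eq0; last first.
  by move=> i' _; rewrite -expr2 sqr_ge0.
by move=> /allP /(_ i (mem_index_enum _)) /=; rewrite -expr2 sqrf_eq0 => /eqP.
Qed.

Lemma ip_sumr m k (X : 'M[R]_(m, k)) I (r : seq I) (P : pred I) (F : I -> 'M[R]_(m,k)) :
  ip X (\sum_(i <- r | P i) F i) = \sum_(i <- r | P i) ip X (F i).
Proof.
apply: (big_ind2 (fun a b => ip X a = b)) => //; first by rewrite ip0r.
by move=> a b c d <- <-; rewrite -[a]scale1r ipDZr mul1r scale1r.
Qed.

Lemma ip_suml m k (X : 'M[R]_(m, k)) I (r : seq I) (P : pred I) (F : I -> 'M[R]_(m,k)) :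
  ip (\sum_(i <- r | P i) F i) X = \sum_(i <- r | P i) ip (F i) X.
Proof. by rewrite ipC ip_sumr; apply: eq_bigr => i _; rewrite ipC. Qed.

Lemma ipZl m k (X Y : 'M[R]_(m, k)) a : ip (a *: Y) X = a * ip Y X.
Proof. by rewrite -[a *: Y]addr0 ipDZl ip0l addr0. Qed.
Lemma ipZr m k (X Y : 'M[R]_(m, k)) a : ip X (a *: Y) = a * ip X Y.
Proof. by rewrite -[a *: Y]addr0 ipDZr ip0r addr0. Qed.
Lemma ipDl m k (X Y Z : 'M[R]_(m, k)) : ip (Y + Z) X = ip Y X + ip Z X.
Proof. by rewrite -[Y]scale1r ipDZl mul1r scale1r. Qed.
Lemma ipDr m k (X Y Z : 'M[R]_(m, k)) : ip X (Y + Z) = ip X Y + ip X Z.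
Proof. by rewrite -[Y]scale1r ipDZr mul1r scale1r. Qed.
Lemma ipNl m k (X Y : 'M[R]_(m, k)) : ip (- Y) X = - ip Y X.
Proof. by rewrite -scaleN1r ipZl mulN1r. Qed.
Lemma ipNr m k (X Y : 'M[R]_(m, k)) : ip X (- Y) = - ip X Y.
Proof. by rewrite -scaleN1r ipZr mulN1r. Qed.
Lemma ipBr m k (X Y Z : 'M[R]_(m, k)) : ip X (Y - Z) = ip X Y - ip X Z.
Proof. by rewrite ipDr ipNr. Qed.

Section Orth.
Variables m k : nat.
Local Notation vT := 'M[R]_(m, k).

Definition ortf (V : {vspace vT}) (X : vT) : 'rV[R]_(\dim V) :=
  \row_i ip (tnth (vbasis V) i) X.

Lemma ortf_lin V : forall a x y, ortf V (a *: x + y) = a *: ortf V x + ortf V y.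
Proof. by move=> a x y; apply/rowP => i; rewrite !mxE ipDZr. Qed.

Lemma ortfE V X : linfun (ortf V) X = ortf V X.
Proof. exact: (lfunE' (@ortf_lin V)). Qed.

Definition orthv (W V : {vspace vT}) := (W :&: lker (linfun (ortf V)))%VS.

Lemma ip_span (V : {vspace vT}) X :
  (forall i, ip (tnth (vbasis V) i) X = 0) -> forall v, v \in V -> ip v X = 0.
Proof.
move=> H v /coord_vbasis ->; rewrite ip_suml big1 // => i _.
by rewrite ipZl -tnth_nth H mulr0.
Qed.

Lemma memv_orth W V X : (X \in orthv W V) <-> (X \in W /\ forall v, v \in V -> ip v X = 0).
Proof.
rewrite /orthv; split.
  move=> /memv_capP [XW]; rewrite memv_ker ortfE => /eqP H.
  split => //; apply: ip_span => i.
  by have := congr1 (fun M : 'rV_ _ => M 0 i) H; rewrite /ortf !mxE.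
move=> [XW H]; apply/memv_capP; split => //.
rewrite memv_ker ortfE; apply/eqP/rowP => i; rewrite !mxE.
by apply: H; apply: vbasis_mem; apply: mem_tnth.
Qed.

Lemma orth_sub W V : (orthv W V <= W)%VS.
Proof. exact: capvSl. Qed.

Lemma dim_orth W V : (V <= W)%VS -> (\dim (orthv W V) + \dim V)%N = \dim W.
Proof.
move=> VW; have := limg_ker_dim (linfun (ortf V)) W; rewrite -/(orthv W V) => <-.
congr (_ + _)%N; apply/eqP; rewrite eqn_leq; apply/andP; split.
  apply: (leq_trans _ (dimvS (limgS _ VW))); rewrite limg_dim_eq //.
  apply/eqP; rewrite -subv0; apply/subvP => x /memv_capP [xV]; rewrite memv0.
  rewrite memv_ker ortfE => /eqP H.
  have: ip x x = 0.
    apply: (ip_span _ xV) => i.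
    by have := congr1 (fun M : 'rV_ _ => M 0 i) H; rewrite /ortf !mxE ipC.
  by move=> /ipxx_eq0 ->.
by rewrite (leq_trans (dimvS (subvf _))) // dimvf dim_matrix mul1r.
Qed.

Lemma orth_orth W V : (V <= W)%VS -> orthv W (orthv W V) = V.
Proof.
move=> VW; apply/eqP; rewrite eq_sym eqEdim; apply/andP; split.
  apply/subvP => v vV; apply/memv_orth; split; first exact: (subvP VW).
  by move=> x /memv_orth [_ H]; rewrite ipC H.
have := dim_orth (orth_sub W V); have := dim_orth VW.
move=> E1 E2; rewrite -(leq_add2r (\dim (orthv W V))) [X in (_ <= X)%N]addnC E1 -E2 //.
Qed.

Definition lin_span' := @lin_span R [the vectType R of vT].

Lemma span_collect (S : set vT) (s : seq vT) :
  (forall x, x \in s -> lin_span S x) ->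
  exists t : seq vT, (forall y, y \in t -> S y) /\ (<<s>> <= <<t>>)%VS.
Proof.
elim: s => [|x s IH] H.
  by exists [::]; split => //; rewrite span_nil sub0v.
have [tx [tS tsp]] := H x (mem_head _ _).
have [t [tS' tsp']] := IH (fun y ys => H y (@mem_behead _ (x :: s) y ys)).
exists (tx ++ t); split.
  by move=> y; rewrite mem_cat => /orP [/tS|/tS'].
rewrite -cat1s !span_cat span_seq1; by apply: addvS; rewrite -?memvE.
Qed.

Lemma lin_span_vs (S : set vT) (s : seq vT) :
  (forall x, x \in s -> lin_span S x) -> forall v, v \in <<s>>%VS -> lin_span S v.
Proof.
move=> /span_collect [t [tS tsp]] v vs; exists t; split => //.
exact: (subvP tsp).
Qed.

Lemma lin_span_sub (S : set vT) x : S x -> lin_span S x.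
Proof. by move=> Sx; exists [:: x]; split; [move=> y; rewrite inE => /eqP -> | apply: memv_span1]. Qed.

Lemma lin_span_comb (S : set vT) a x y :
  lin_span S x -> lin_span S y -> lin_span S (a *: x + y).
Proof.
move=> Hx Hy; apply: (@lin_span_vs S [:: x; y]).
  by move=> z; rewrite !inE => /orP [] /eqP ->.
by apply: memvD; [apply: memvZ|]; apply: memv_span; rewrite !inE eqxx ?orbT.
Qed.

Lemma lin_span0 (S : set vT) : lin_span S 0.
Proof. by exists [::]; split => //; rewrite mem0v. Qed.

Lemma lin_span_sum (S : set vT) I (r : seq I) (P : pred I) (F : I -> vT) :
  (forall i, P i -> lin_span S (F i)) -> lin_span S (\sum_(i <- r | P i) F i).
Proof.
move=> H; elim/big_rec: _ => [|i y Pi Hy]; first exact: lin_span0.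
by rewrite -[F i]scale1r; apply: lin_span_comb => //; apply: H.
Qed.

Lemma free_sub (s : seq vT) : exists t, [/\ {subset t <= s}, free t & <<t>>%VS = <<s>>%VS].
Proof.
elim: s => [|x s [t [ts ft tsp]]].
  by exists [::]; split; [by [] | exact: nil_free | by []].
case: (boolP (x \in <<t>>%VS)) => xt.
  exists t; split; [|exact: ft|].
    by move=> y /ts; rewrite inE => ->; rewrite orbT.
  rewrite -cat1s span_cat span_seq1 -tsp; apply/eqP; rewrite eq_sym.
  by apply/eqP/addv_idPr; rewrite -memvE.
exists (x :: t); split.
- by move=> y; rewrite !inE => /orP [->|/ts ->]; rewrite ?orbT.
- by rewrite free_cons xt ft.
- by rewrite -(cat1s x t) -(cat1s x s) !span_cat tsp.
Qed.

Lemma dim_setE (S : set vT) (V : {vspace vT}) :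
  (forall x, S x -> x \in V) -> (forall v, v \in V -> lin_span S v) ->
  dim_set S = \dim V.
Proof.
move=> SV VS; apply/eqP; rewrite eqn_leq; apply/andP; split.
  apply/bigmax_leqP => i /asboolP [s [sS fs]].
  move: (fs); rewrite /free => /eqP; rewrite size_tuple => <-.
  by apply: dimvS; apply/span_subvP => x /sS /SV.
have [t [tS tsp]] := @span_collect S (vbasis V) (fun x xs => VS x (vbasis_mem xs)).
have [u [ut fu usp]] := free_sub t.
have Vu : <<u>>%VS = V.
  apply/eqP; rewrite eqEdim; apply/andP; split.
    by apply/span_subvP => x /ut /tS /SV.
  by rewrite usp -(span_basis (vbasisP V)); apply: dimvS.
have sz : size u = \dim V by rewrite -Vu; move: fu => /eqP.
have lt : (\dim V < (\dim (fullv : {vspace vT})).+1)%N by rewrite ltnS dimvS ?subvf.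
apply: (@leq_bigmax_cond _ _ (fun k : 'I__ => nat_of_ord k) (Ordinal lt)) => /=.
apply/asboolP; exists (Tuple (introT eqP sz)); split.
  by move=> x /= /ut /tS.
exact: fu.
Qed.

End Orth.
End GenA.

Section GenA2.
Variable R : realType.
Variables m k : nat.
Local Notation vT := 'M[R]_(m, k).
Lemma ip_seq (s : seq vT) X : (forall x, x \in s -> ip x X = 0) ->
  forall v, v \in <<s>>%VS -> ip v X = 0.
Proof.
move=> H v vs; have := @coord_span _ _ _ (in_tuple s) v; rewrite in_tupleE => /(_ vs) ->.
rewrite ip_suml big1 // => i _; rewrite ipZl H ?mulr0 //.
by apply: mem_nth; rewrite ?size_tuple ?ltn_ord.
Qed.
End GenA2.


Section GenB.
Variable R : realType.
Variable n : nat.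
Implicit Types (X Y M : 'M[R]_n) (v w : 'cV[R]_n).

Definition qf X v w : R := (v^T *m X *m w) 0 0.

Lemma qfDl X v1 v2 w : qf X (v1 + v2) w = qf X v1 w + qf X v2 w.
Proof. by rewrite /qf linearD /= !mulmxDl mxE. Qed.
Lemma qfDr X v w1 w2 : qf X v (w1 + w2) = qf X v w1 + qf X v w2.
Proof. by rewrite /qf !mulmxDr mxE. Qed.
Lemma qfZl X a v w : qf X (a *: v) w = a * qf X v w.
Proof. by rewrite /qf linearZ /= -!scalemxAl mxE. Qed.
Lemma qfZr X a v w : qf X v (a *: w) = a * qf X v w.
Proof. by rewrite /qf -!scalemxAr mxE. Qed.
Lemma qfDm X Y v w : qf (X + Y) v w = qf X v w + qf Y v w.
Proof. by rewrite /qf mulmxDr mulmxDl mxE. Qed.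
Lemma qfZm X a v w : qf (a *: X) v w = a * qf X v w.
Proof. by rewrite /qf -scalemxAr -scalemxAl mxE. Qed.
Lemma qfNm X v w : qf (- X) v w = - qf X v w.
Proof. by rewrite -scaleN1r qfZm mulN1r. Qed.
Lemma qfBm X Y v w : qf (X - Y) v w = qf X v w - qf Y v w.
Proof. by rewrite qfDm qfNm. Qed.
Lemma qf0m v w : qf 0 v w = 0.
Proof. by rewrite /qf mulmx0 mul0mx mxE. Qed.
Lemma qf_sym X v w : X^T = X -> qf X v w = qf X w v.
Proof.
move=> sX; rewrite /qf.
have -> : (v^T *m X *m w) 0 0 = ((v^T *m X *m w)^T) 0 0 by rewrite [RHS]mxE.
by rewrite !trmx_mul trmxK sX mulmxA.
Qed.
Lemma qf_mulr X M v w : qf (X *m M) v w = qf X v (M *m w).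
Proof. by rewrite /qf !mulmxA. Qed.
Lemma qf_mull X M v w : qf (M^T *m X) v w = qf X (M *m v) w.
Proof. by rewrite /qf trmx_mul !mulmxA. Qed.
Lemma ip_rank1 X w : ip (w *m w^T) X = qf X w w.
Proof.
rewrite /ip /qf trmx_mul trmxK -mulmxA mxtrace_mulC mulmxA.
by rewrite (mxtrace_mulC (X *m w)) trace_mx11.
Qed.
Lemma qfE X v w : qf X v w = \sum_i \sum_j v i 0 * X i j * w j 0.
Proof.
rewrite /qf mxE (exchange_big) /=; apply: eq_bigr => j _; rewrite mxE mulr_suml.
by apply: eq_bigr => i _; rewrite !mxE.
Qed.
Lemma qf1 v : qf 1 v v = \sum_i v i 0 ^+ 2.
Proof.
rewrite qfE; apply: eq_bigr => i _; rewrite (bigD1 i) //= big1 ?addr0.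
  by rewrite mxE eqxx mulr1 expr2.
by move=> j ji; rewrite mxE eq_sym (negbTE ji) mulr0 mul0r.
Qed.
Lemma qf1_ge0 v : 0 <= qf 1 v v.
Proof. by rewrite qf1 sumr_ge0 // => i _; rewrite sqr_ge0. Qed.

Lemma disc (a b c : R) : 0 <= c -> (forall t, 0 <= a + 2 * b * t + c * t ^+ 2) -> b ^+ 2 <= a * c.
Proof.
move=> c0 H; have [ce|cn0] := eqVneq c 0.
  rewrite ce mulr0; have [be|bn0] := eqVneq b 0; first by rewrite be expr0n.
  have := H (- (a + 1) / (2 * b)); rewrite ce mul0r addr0.
  have -> : 2 * b * (- (a + 1) / (2 * b)) = - (a + 1).
    by field.
  lra.
have cp : 0 < c by rewrite lt_def cn0.
have := H (- b / c).
have -> : c * (- b / c) ^+ 2 = b ^+ 2 / c.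
  by field.
have -> : 2 * b * (- b / c) = - 2 * (b ^+ 2 / c) by field.
move=> h; have : 0 <= a - b ^+ 2 / c by lra.
by rewrite subr_ge0 ler_pdivrMr // mulrC.
Qed.

Lemma CS (P : 'M[R]_n) x y : P^T = P -> (forall w, 0 <= qf P w w) ->
  qf P x y ^+ 2 <= qf P x x * qf P y y.
Proof.
move=> sP psP; apply: disc => // t.
have := psP (x + t *: y).
rewrite !qfDl !qfDr !qfZl !qfZr (qf_sym y x sP).
by rewrite expr2; lra.
Qed.

Lemma two_ab (x y : R) : `|x * y| * 2 <= x ^+ 2 + y ^+ 2.
Proof.
rewrite normrM; have := real_normK (num_real x); have := real_normK (num_real y).
have := sqr_ge0 (`|x| - `|y|); rewrite !expr2; nra.
Qed.

Lemma bound_abs (H : 'M[R]_n) v :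
  qf H v v <= (\sum_i \sum_j `|H i j|) * qf 1 v v.
Proof.
rewrite qfE mulr_suml; apply: ler_sum => i _; rewrite mulr_suml; apply: ler_sum => j _.
have Hi : v i 0 ^+ 2 <= qf 1 v v.
  by rewrite qf1 (bigD1 i) //= lerDl sumr_ge0 // => k _; rewrite sqr_ge0.
have Hj : v j 0 ^+ 2 <= qf 1 v v.
  by rewrite qf1 (bigD1 j) //= lerDl sumr_ge0 // => k _; rewrite sqr_ge0.
have hH : 0 <= `|H i j| by [].
have e1 : v i 0 * H i j * v j 0 <= `|H i j| * `|v i 0 * v j 0|.
  rewrite mulrAC -normrM; apply: (le_trans (ler_norm _)); rewrite !normrM; lra.
apply: (le_trans e1); rewrite ler_wpM2l //.
have : `|v i 0 * v j 0| * 2 <= v i 0 ^+ 2 + v j 0 ^+ 2.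
  exact: two_ab.
lra.
Qed.

Lemma pd_unit (X0 : 'M[R]_n) : pd X0 -> X0 \in unitmx.
Proof.
move=> [sX pX]; rewrite unitmxE unitfE; apply/negP => /det0P [u un0 uX].
have : (u^T)^T *m X0 *m u^T = 0.
  by rewrite trmxK uX mul0mx.
move=> h; have := pX (u^T); rewrite -[u^T == 0](inj_eq (@trmx_inj _ _ _)) trmxK trmx0 un0 uX mul0mx mxE.
by move=> /(_ isT); rewrite ltxx.
Qed.

Lemma pd_bound (X0 : 'M[R]_n) : pd X0 -> exists c0, 0 <= c0 /\ forall v, qf 1 v v <= c0 * qf X0 v v.
Proof.
move=> pX; have U := pd_unit pX; have [sX pX'] := pX.
have psX : forall w, 0 <= qf X0 w w.
  move=> w; have [->|wn0] := eqVneq w 0; first by rewrite /qf mulmx0 mxE.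
  by apply: ltW; apply: pX'.
pose y (i : 'I_n) : 'cV[R]_n := invmx X0 *m delta_mx i 0.
exists (\sum_i qf X0 (y i) (y i)); split; first by apply: sumr_ge0 => i _.
move=> v; rewrite qf1 mulr_suml; apply: ler_sum => i _.
have e : qf X0 v (y i) = v i 0.
  rewrite /y -qf_mulr mulmxV // /qf mulmx1 !mxE.
  by rewrite (bigD1 i) //= big1 ?addr0 ?mxE ?eqxx ?mulr1 // => j ji; rewrite !mxE (negbTE ji) mulr0.
by rewrite -e mulrC; apply: CS.
Qed.

End GenB.


Section GenC.
Variable R : realType.
Lemma trD m k (A B : 'M[R]_(m,k)) : (A + B)^T = A^T + B^T.
Proof. by apply/matrixP => i j; rewrite !mxE. Qed.
Lemma trZ m k a (A : 'M[R]_(m,k)) : (a *: A)^T = a *: A^T.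
Proof. by apply/matrixP => i j; rewrite !mxE. Qed.
Lemma trN m k (A : 'M[R]_(m,k)) : (- A)^T = - A^T.
Proof. by apply/matrixP => i j; rewrite !mxE. Qed.
Lemma tr_sum m k I (r : seq I) (P : pred I) (F : I -> 'M[R]_(m,k)) :
  (\sum_(i <- r | P i) F i)^T = \sum_(i <- r | P i) (F i)^T.
Proof.
apply: (big_ind2 (fun x y => x^T = y)); first exact: trmx0.
  by move=> x1 x2 y1 y2 <- <-; rewrite trD.
by [].
Qed.
Lemma zmod_id (V : zmodType) (x y z w : V) : x + y = (z + x) + (y + w) + (- z + - w).
Proof. by rewrite -opprD [z + x]addrC addrACA addrK. Qed.
Lemma trB m k (A B : 'M[R]_(m,k)) : (A - B)^T = A^T - B^T.
Proof. by rewrite trD trN. Qed.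
Variable n : nat.
Local Notation vT := 'M[R]_n.

Lemma innerE (X Y : vT) : inner X Y = ip X Y.
Proof. by []. Qed.

Definition symf (X : vT) := X^T - X.
Lemma symf_lin : forall a x y, symf (a *: x + y) = a *: symf x + symf y.
Proof. by move=> a x y; rewrite /symf trD trZ scalerBr opprD addrACA. Qed.
Definition Symv : {vspace vT} := lker (linfun symf).
Lemma memv_Sym X : (X \in Symv) = (X^T == X).
Proof. by rewrite memv_ker (lfunE' symf_lin) /symf subr_eq0. Qed.

Variable Xb : vT.
Hypothesis sXb : Xb^T = Xb.

Definition rmf (Y : vT) := Y *m Xb.
Lemma rmf_lin : forall a x y, rmf (a *: x + y) = a *: rmf x + rmf y.
Proof. by move=> a x y; rewrite /rmf mulmxDl scalemxAl. Qed.
Definition Kv : {vspace vT} := (Symv :&: lker (linfun rmf))%VS.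
Lemma memv_Kv Y : (Y \in Kv) <-> (Y^T = Y /\ Y *m Xb = 0).
Proof.
rewrite /Kv; split.
  by move=> /memv_capP [] ; rewrite memv_Sym memv_ker (lfunE' rmf_lin) => /eqP ? /eqP.
by move=> [h1 h2]; apply/memv_capP; rewrite memv_Sym memv_ker (lfunE' rmf_lin) /rmf h1 h2 !eqxx.
Qed.

Definition psi (M : vT) := Xb *m M + M^T *m Xb.
Lemma psi_lin : forall a x y, psi (a *: x + y) = a *: psi x + psi y.
Proof.
move=> a x y; rewrite /psi trD trZ !mulmxDr !mulmxDl -!scalemxAl -scalemxAr.
by rewrite scalerDr addrACA.
Qed.
Definition Gv : {vspace vT} := limg (linfun psi).
Lemma memv_Gv Z : (Z \in Gv) <-> exists M, Z = psi M.
Proof.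
split; first by move=> /memv_imgP [M _ ->]; exists M; rewrite (lfunE' psi_lin).
by move=> [M ->]; rewrite -(lfunE' psi_lin); apply: memv_img; apply: memvf.
Qed.
Lemma psi_sym M : (psi M)^T = psi M.
Proof. by rewrite /psi trD !trmx_mul trmxK sXb addrC. Qed.
Lemma Gv_Sym : (Gv <= Symv)%VS.
Proof. by apply/subvP => Z /memv_Gv [M ->]; rewrite memv_Sym psi_sym. Qed.
Lemma Kv_Sym : (Kv <= Symv)%VS.
Proof. exact: capvSl. Qed.

Lemma ip_psi M Y : Y^T = Y -> ip (psi M) Y = \tr (M^T *m (Xb *m Y)) + \tr (M *m (Y *m Xb)).
Proof.
move=> sY; rewrite /ip psi_sym /psi mulmxDl mxtraceD -!mulmxA; rewrite addrC; congr (_ + _).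
by rewrite mxtrace_mulC -mulmxA.
Qed.

Lemma Kv_orth : Kv = orthv Symv Gv.
Proof.
apply/vspaceP => Y; apply/idP/idP.
  move=> /memv_Kv [sY YX]; apply/memv_orth; split; first by rewrite memv_Sym sY.
  move=> Z /memv_Gv [M ->]; rewrite ip_psi // YX.
  have -> : Xb *m Y = 0 by rewrite -[Xb *m Y]trmxK trmx_mul sY sXb YX trmx0.
  by rewrite !mulmx0 mxtrace0 addr0.
move=> /memv_orth [sY H]; move: sY; rewrite memv_Sym => /eqP sY.
have := H (psi (Xb *m Y)); rewrite ip_psi //.
have e : \tr (Xb *m Y *m (Y *m Xb)) = \tr ((Xb *m Y)^T *m (Xb *m Y)).
  by rewrite trmx_mul sY sXb mxtrace_mulC !mulmxA.
rewrite e -/(ip _ _) -/(ip _ _).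
move=> /(_ ((memv_Gv _).2 (ex_intro _ _ erefl))) h.
have /ipxx_eq0 h2 : ip (Xb *m Y) (Xb *m Y) = 0 by lra.
apply/memv_Kv; split => //.
by rewrite -[Y *m Xb]trmxK trmx_mul sY sXb h2 trmx0.
Qed.

Lemma Gv_orth : Gv = orthv Symv Kv.
Proof. by rewrite Kv_orth orth_orth // Gv_Sym. Qed.

Variables (p q : nat) (A : 'I_p -> vT) (a : 'I_p -> R) (B : 'I_q -> vT) (b : 'I_q -> R).
Hypotheses (sA : forall i, (A i)^T = A i) (sB : forall i, (B i)^T = B i).
Hypothesis fX : feas A a B b Xb.

Definition act i : bool := lmap B Xb i - b i == 0.
Definition ABs := [seq A i | i <- enum 'I_p] ++ [seq B i | i <- enum 'I_q & act i].
Definition ABv := <<ABs>>%VS.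

Lemma ABs_sym x : x \in ABs -> x^T = x.
Proof. by rewrite mem_cat => /orP [/mapP [i _ ->]|/mapP [i _ ->]]. Qed.

Lemma ABv_Sym : (ABv <= Symv)%VS.
Proof. by apply/span_subvP => x /ABs_sym; rewrite memv_Sym => ->. Qed.

Lemma orth_ABv X : X \in orthv Symv ABv <->
  [/\ X^T = X, forall i, ip (A i) X = 0 & forall i, act i -> ip (B i) X = 0].
Proof.
split.
  move=> /memv_orth [sX H]; split; first by move: sX; rewrite memv_Sym => /eqP.
    by move=> i; apply: H; apply: memv_span; rewrite mem_cat map_f ?mem_enum.
  move=> i ai; apply: H; apply: memv_span; rewrite mem_cat; apply/orP; right.
  by apply: map_f; rewrite mem_filter ai mem_enum.
move=> [sX HA HB]; apply/memv_orth; split; first by rewrite memv_Sym sX.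
apply: ip_seq => x; rewrite mem_cat => /orP [/mapP [i _ ->]|/mapP [i]] //.
by rewrite mem_filter => /andP [ai _] ->; apply: HB.
Qed.

Definition Uv := (Gv :&: orthv Symv ABv)%VS.
Lemma Uv_Sym : (Uv <= Symv)%VS.
Proof. exact: (subv_trans (capvSl _ _) Gv_Sym). Qed.

Lemma Uv_eq : Uv = orthv Symv (Kv + ABv).
Proof.
apply/vspaceP => X; rewrite /Uv Gv_orth; apply/idP/idP.
  move=> /memv_capP [/memv_orth [sX H1] /memv_orth [_ H2]]; apply/memv_orth; split => //.
  by move=> v /memv_addP [u uK [w wAB ->]]; rewrite ipDl H1 // H2 // addr0.
move=> /memv_orth [sX H]; apply/memv_capP; split; apply/memv_orth; split => // v vK; apply: H.
  by rewrite (subvP (addvSl _ _)).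
by rewrite (subvP (addvSr _ _)).
Qed.

Definition Wv := orthv Symv Uv.
Lemma Wv_eq : Wv = (Kv + ABv)%VS.
Proof. by rewrite /Wv Uv_eq orth_orth // subv_add Kv_Sym ABv_Sym. Qed.

Lemma dim_Wv : \dim Wv = (\dim Symv - \dim Uv)%N.
Proof. by rewrite -(dim_orth Uv_Sym) addnK. Qed.

Local Notation Nc := (normal_cone (feas A a B b) Xb).

Lemma N_A i : Nc (A i).
Proof.
split; first exact: sA.
move=> X [_ [HA _]]; move: fX => [_ [HA' _]].
have := congr1 (fun f => f i) HA; have := congr1 (fun f => f i) HA'.
by rewrite /lmap => -> ->.
Qed.

Lemma N_B i : act i -> Nc (B i).
Proof.
move=> /eqP ai; split; first exact: sB.
move=> X [_ [_ HB]]; have := HB i; rewrite /lmap in ai *; lra.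
Qed.

Lemma N_rank1 (w : 'cV[R]_n) : Xb *m w = 0 -> Nc (- (w *m w^T)).
Proof.
move=> Xw; split.
  by rewrite /Sym /= trN trmx_mul trmxK.
move=> X [[sX psX] _]; rewrite !innerE !ipNl !ip_rank1.
have -> : qf Xb w w = 0 by rewrite /qf -mulmxA Xw mulmx0 mxE.
by rewrite oppr0 oppr_le0; apply: psX.
Qed.


Lemma span_rank1 (w : 'cV[R]_n) : Xb *m w = 0 -> lin_span Nc (w *m w^T).
Proof.
move=> Xw; have := lin_span_comb (-1) (lin_span_sub (N_rank1 Xw)) (lin_span0 Nc).
by rewrite addr0 scaleN1r opprK.
Qed.

Lemma Kv_span Y : Y \in Kv -> lin_span Nc Y.
Proof.
move=> /memv_Kv [sY YX].
have XY : Xb *m Y = 0 by rewrite -[Xb *m Y]trmxK trmx_mul sY sXb YX trmx0.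
pose Q : vT := 1%:M - pinvmx Xb *m Xb.
have XQ : Xb *m Q = 0.
  by rewrite /Q mulmxBr mulmx1 mulmxA (mulmxKpV (submx_refl Xb)) subrr.
have QY : Q *m Y = Y by rewrite /Q mulmxBl mul1mx -mulmxA XY mulmx0 subr0.
have YQ : Y *m Q^T = Y by rewrite -[Y *m Q^T]trmxK trmx_mul trmxK sY QY.
pose r (i : 'I_n) : 'cV[R]_n := Q *m delta_mx i 0.
have Xr i : Xb *m r i = 0 by rewrite /r mulmxA XQ mul0mx.
have eY : Y = \sum_i \sum_j Y i j *: (r i *m (r j)^T).
  rewrite -{1}YQ -{1}QY {1}(matrix_sum_delta Y) mulmx_sumr mulmx_suml.
  apply: eq_bigr => i _; rewrite mulmx_sumr mulmx_suml; apply: eq_bigr => j _.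
  rewrite -scalemxAr -scalemxAl /r trmx_mul trmx_delta mulmxA -(mulmxA Q).
  by rewrite mul_delta_mx.
have eYT : Y = \sum_i \sum_j Y i j *: (r j *m (r i)^T).
  rewrite -{1}sY {1}eY tr_sum; apply: eq_bigr => i _; rewrite tr_sum.
  by apply: eq_bigr => j _; rewrite trZ trmx_mul trmxK.
have -> : Y = 2^-1 *: (\sum_i \sum_j Y i j *: (r i *m (r j)^T + r j *m (r i)^T)).
  have -> : \sum_i \sum_j Y i j *: (r i *m (r j)^T + r j *m (r i)^T) = Y + Y.
    rewrite [X in _ = X + _]eY [X in _ = _ + X]eYT -big_split; apply: eq_bigr => i _.
    by rewrite -big_split; apply: eq_bigr => j _; rewrite scalerDr.
  by rewrite -mulr2n -scaler_nat scalerA mulVf ?pnatr_eq0 // scale1r.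
rewrite -[X in lin_span _ X]addr0; apply: lin_span_comb; last exact: lin_span0.
apply: lin_span_sum => i _; apply: lin_span_sum => j _.
rewrite -[X in lin_span _ X]addr0; apply: lin_span_comb; last exact: lin_span0.
have -> : r i *m (r j)^T + r j *m (r i)^T =
  1 *: ((r i + r j) *m (r i + r j)^T) + ((-1) *: (r i *m (r i)^T) + (-1) *: (r j *m (r j)^T)).
  rewrite trD mulmxDl !mulmxDr !scaleN1r scale1r.
  exact: zmod_id.
apply: lin_span_comb; first by apply: span_rank1; rewrite mulmxDr !Xr addr0.
have lsc x c : lin_span Nc x -> lin_span Nc (c *: x).
  by move=> h; rewrite -[_ *: _]addr0; apply: lin_span_comb => //; exact: lin_span0.
by apply: lin_span_comb; [|apply: lsc]; apply: span_rank1.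
Qed.


Lemma Wv_span Y : Y \in Wv -> lin_span Nc Y.
Proof.
rewrite Wv_eq -{1}(span_basis (vbasisP Kv)) /ABv -span_cat; apply: lin_span_vs => x.
rewrite mem_cat => /orP [/vbasis_mem /Kv_span //|].
rewrite mem_cat => /orP [/mapP [i _ ->]|/mapP [i]]; first exact/lin_span_sub/N_A.
by rewrite mem_filter => /andP [ai _] ->; apply/lin_span_sub/N_B.
Qed.

End GenC.


Section GenD.
Variable R : realType.

Lemma alpha0 (d al ga : R) : 0 < d -> (forall t, `|t| <= d -> t * al + ga * t ^+ 2 <= 0) -> al = 0.
Proof.
move=> d0 H.
pose d' := d / (1 + d).
have p1 : 0 < 1 + d by lra.
have d'0 : 0 < d' by rewrite divr_gt0.
have d'd : d' <= d by rewrite ler_pdivrMr //; nra.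
have d'1 : d' <= 1 by rewrite ler_pdivrMr //; lra.
pose D := 1 + `|al| + `|ga|.
have D0 : 0 < D by rewrite /D; have := normr_ge0 al; have := normr_ge0 ga; lra.
pose e := d' / D.
have e0 : 0 < e by rewrite divr_gt0.
have eD : e * D = d' by rewrite /e mulfVK // gt_eqF.
have ha : e * `|al| <= d'.
  by rewrite -eD ler_wpM2l ?ltW // /D; have := normr_ge0 ga; lra.
have hg : e * `|ga| < 1.
  apply: (lt_le_trans _ d'1); rewrite -eD ltr_pM2l // /D; have := normr_ge0 al; lra.
have := H (e * al).
rewrite normrM (gtr0_norm e0) => /(_ (le_trans ha d'd)).
have g1 : 0 < 1 + ga * e.
  have : - (e * `|ga|) <= ga * e.
    have h1 : - ga <= `|ga| by rewrite -normrN ler_norm.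
    nra.
  lra.
have -> : e * al * al + ga * (e * al) ^+ 2 = (e * (1 + ga * e)) * al ^+ 2 by ring.
rewrite pmulr_rle0 ?mulr_gt0 //.
move=> h; apply/eqP; rewrite -sqrf_eq0 eq_le h sqr_ge0 //.
by rewrite invr_gt0.
by rewrite invr_gt0.
Qed.


Variable n : nat.
Local Notation vT := 'M[R]_n.
Variables (Xb : vT) (p q : nat) (A : 'I_p -> vT) (a : 'I_p -> R) (B : 'I_q -> vT) (b : 'I_q -> R).
Hypotheses (sA : forall i, (A i)^T = A i) (sB : forall i, (B i)^T = B i).
Hypothesis fX : feas A a B b Xb.
Variable X0 : vT.
Hypotheses (fX0 : feas A a B b X0) (pX0 : pd X0).

Lemma psd_step (r t p0 m h x0 c : R) :
  0 <= x0 -> 0 <= h -> 1 / 2 <= r -> r = 1 - c * t ^+ 2 -> 0 <= c * t ^+ 2 ->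
  h <= c / 2 * x0 -> 0 <= r ^+ 2 * p0 + 2 * r * t * m + t ^+ 2 * h ->
  0 <= p0 + t * (2 * m) + c * t ^+ 2 * (x0 - p0).
Proof.
move=> x00 h0 r2 re ct hx F.
have -> : p0 + t * (2 * m) + c * t ^+ 2 * (x0 - p0) = (r * p0 + 2 * t * m) + c * t ^+ 2 * x0.
  by rewrite re; ring.
set y := r * p0 + 2 * t * m.
have ry : - (t ^+ 2 * h) <= r * y by rewrite /y; lra.
have th : t ^+ 2 * h <= t ^+ 2 * (c / 2 * x0) by rewrite ler_wpM2l // sqr_ge0.
have cx : 0 <= c * t ^+ 2 * x0 by rewrite mulr_ge0.
case: (leP 0 y) => y0; first lra.
have ry2 : r * y <= y / 2 by nra.
have e : t ^+ 2 * (c / 2 * x0) = c * t ^+ 2 * x0 / 2 by ring.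
rewrite e in th; lra.
Qed.

Lemma curve (Z M : vT) : Z = psi Xb M -> (forall i, ip (A i) Z = 0) ->
  (forall i, act Xb B b i -> ip (B i) Z = 0) ->
  exists d c, [/\ 0 < d, 0 <= c &
    forall t, `|t| <= d -> feas A a B b (Xb + t *: Z + (c * t ^+ 2) *: (X0 - Xb))].
Proof.
move=> eZ ZA ZB.
have [[sXb psXb] [HA HB]] := fX.
have [[sX0 psX0] [HA0 HB0]] := fX0.
pose H := M^T *m Xb *m M.
pose ka := \sum_i \sum_j `|H i j|.
have ka0 : 0 <= ka by apply: sumr_ge0 => i _; apply: sumr_ge0.
have [c0 [c00 hc0]] := pd_bound pX0.
pose c := 2 * ka * c0.
have c_0 : 0 <= c by rewrite /c !mulr_ge0.
pose be0 i := ip (B i) Xb.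
pose be1 i := ip (B i) X0.
pose g i := if act Xb B b i then 1 else b i - be0 i.
have g0 i : 0 < g i.
  rewrite /g; case: ifP => // /negbT; rewrite /act /lmap => hi.
  have := HB i; rewrite /lmap -/(be0 i) innerE => h.
  rewrite subr_gt0 lt_def h andbT; apply: contra hi; rewrite /be0 => /eqP ->.
  by rewrite subrr.
pose K i := `|ip (B i) Z| + c * `|be1 i - be0 i|.
have K0 i : 0 <= K i by rewrite /K addr_ge0 ?mulr_ge0.
pose D := 1 + 2 * c + \sum_i (K i + 1) / g i.
have S0 : 0 <= \sum_i (K i + 1) / g i.
  by apply: sumr_ge0 => i _; apply: divr_ge0; [apply: addr_ge0 | apply: ltW].
have D1 : 1 <= D by rewrite /D; lra.
have D0 : 0 < D by lra.
pose d := D^-1.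
have d0 : 0 < d by rewrite invr_gt0.
have dD : d * D = 1 by rewrite mulVf // gt_eqF.
have d1 : d <= 1 by rewrite -dD ler_peMr // ltW.
have cd : 2 * c * d <= 1.
  have h : 2 * c <= D by rewrite /D; lra.
  nra.
have Kd i : d * K i <= g i.
  have h1 : (K i + 1) / g i <= D.
    rewrite /D (bigD1 i) //=.
    have : 0 <= \sum_(j | j != i) (K j + 1) / g j.
      by apply: sumr_ge0 => j _; apply: divr_ge0; [apply: addr_ge0 | apply: ltW].
    lra.
  have h2 : K i + 1 <= D * g i by rewrite -ler_pdivrMr.
  have h3 : d * (K i + 1) <= g i.
    have : d * (K i + 1) <= d * (D * g i) by rewrite ler_wpM2l // ltW.
    by rewrite mulrA dD mul1r.
  lra.
exists d, c; split => // t td.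
have t2 : t ^+ 2 <= d.
  have : `|t| ^+ 2 <= d * d by rewrite expr2 ler_pM ?normr_ge0.
  by rewrite real_normK ?num_real //; nra.
have ct : c * t ^+ 2 <= 1 / 2.
  have : c * t ^+ 2 <= c * d by rewrite ler_wpM2l.
  lra.
have ct0 : 0 <= c * t ^+ 2 by rewrite mulr_ge0 // sqr_ge0.
have sZ : Z^T = Z by rewrite eZ psi_sym.
split; [split|split].
- by rewrite !trD !trZ trB sZ sX0 sXb.
- move=> v; rewrite -/(qf _ v v) !qfDm !qfZm qfBm.
  have -> : qf Z v v = 2 * qf Xb v (M *m v).
    rewrite eZ /psi qfDm qf_mulr qf_mull (qf_sym (M *m v) v sXb); ring.
  pose u := M *m v.
  apply: (psd_step (r := 1 - c * t ^+ 2) (h := qf Xb u u)) => //.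
  + exact: psX0.
  + exact: psXb.
  + lra.
  + have -> : qf Xb u u = qf H v v by rewrite /H qf_mulr qf_mull.
    apply: (le_trans (bound_abs _ _)); rewrite -/ka.
    have := hc0 v => h.
    have -> : c / 2 * qf X0 v v = ka * (c0 * qf X0 v v) by rewrite /c; field.
    by rewrite ler_wpM2l.
  + have := psXb ((1 - c * t ^+ 2) *: v + t *: u); rewrite -/(qf _ _ _).
    rewrite !qfDl !qfDr !qfZl !qfZr (qf_sym u v sXb).
    by move=> h; rewrite -/u; lra.
- apply: boolp.funext => i; rewrite /lmap innerE !ipDr !ipZr ipBr ZA.
  have := congr1 (fun f => f i) HA; have := congr1 (fun f => f i) HA0.
  rewrite /lmap !innerE => -> ->; ring.
- move=> i; rewrite /lmap innerE !ipDr !ipZr ipBr -/(be0 i) -/(be1 i).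
  have hb0 := HB i; have hb1 := HB0 i; rewrite /lmap !innerE -/(be0 i) -/(be1 i) in hb0 hb1.
  case ai: (act Xb B b i).
    rewrite ZB // mulr0 addr0.
    move: ai; rewrite /act /lmap innerE -/(be0 i) subr_eq0 => /eqP ->.
    have : c * t ^+ 2 * (be1 i - b i) <= 0 by rewrite mulr_ge0_le0 // subr_le0.
    lra.
  have gi : g i = b i - be0 i by rewrite /g ai.
  have := Kd i; rewrite gi /K => h.
  have e1 : t * ip (B i) Z <= d * `|ip (B i) Z|.
    have := ler_norm (t * ip (B i) Z); rewrite normrM.
    have := normr_ge0 (ip (B i) Z); nra.
  have e2 : c * t ^+ 2 * (be1 i - be0 i) <= d * (c * `|be1 i - be0 i|).
    have w1 := ler_norm (be1 i - be0 i); have w0 := normr_ge0 (be1 i - be0 i).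
    apply: (@le_trans _ _ (c * t ^+ 2 * `|be1 i - be0 i|)); first by rewrite ler_wpM2l.
    have cw : 0 <= c * `|be1 i - be0 i| by rewrite mulr_ge0.
    have : c * `|be1 i - be0 i| * t ^+ 2 <= c * `|be1 i - be0 i| * d by rewrite ler_wpM2l.
    rewrite [c * t ^+ 2 * _]mulrAC [d * _]mulrC //.
  lra.
Qed.


Lemma N_sub Y : normal_cone (feas A a B b) Xb Y -> Y \in Wv Xb A B b.
Proof.
move=> [sY HY]; apply/memv_orth; split; first by rewrite memv_Sym; apply/eqP.
move=> Z /memv_capP [/memv_Gv [M eZ] /orth_ABv [sZ ZA ZB]].
have [d [c [d0 c0 H]]] := curve eZ ZA ZB.
rewrite ipC; apply: (alpha0 (ga := c * ip Y (X0 - Xb)) d0) => t /H /HY.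
rewrite !innerE => h; rewrite !ipDr !ipZr in h.
have -> : t * ip Y Z + c * ip Y (X0 - Xb) * t ^+ 2 =
  (ip Y Xb + t * ip Y Z + c * t ^+ 2 * ip Y (X0 - Xb)) - ip Y Xb by ring.
lra.
Qed.

End GenD.


Section GenE.
Variable R : realType.
Variable n : nat.
Local Notation vT := 'M[R]_n.

Lemma dimSym : dim_set (@Sym R n) = \dim (Symv R n).
Proof.
apply: dim_setE => [x|v vS]; first by rewrite /Sym /= memv_Sym => ->.
by apply: lin_span_sub; move: vS; rewrite memv_Sym => /eqP.
Qed.

Lemma gens_Gv (Xb : vT) X : lin_span (gens Xb) X <-> X \in Gv Xb.
Proof.
have gG u v : 2^-1 *: (Xb *m (u *m v^T) + v *m u^T *m Xb) = psi Xb (2^-1 *: (u *m v^T)).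
  by rewrite /psi trZ trmx_mul trmxK -scalemxAr -scalemxAl scalerDr.
split.
  move=> [s [sS Xs]]; apply: (subvP _ _ Xs); apply/span_subvP => y /sS [u [v ->]].
  by rewrite gG; apply/memv_Gv; eexists.
move=> /memv_Gv [M ->].
rewrite -(lfunE' (psi_lin Xb)) (matrix_sum_delta M) !linear_sum /=.
apply: lin_span_sum => i _; rewrite linear_sum; apply: lin_span_sum => j _.
rewrite linearZ /= (lfunE' (psi_lin Xb)) -[X in lin_span _ X]addr0.
apply: lin_span_comb; last exact: lin_span0.
pose ei : 'cV[R]_n := delta_mx i 0; pose ej : 'cV[R]_n := delta_mx j 0.
have -> : psi Xb (delta_mx i j) = 2 *: (2^-1 *: (Xb *m (ei *m ej^T)
   + ej *m ei^T *m Xb)).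
  rewrite scalerA divff ?pnatr_eq0 // scale1r /psi /ei /ej !trmx_delta !mul_delta_mx.
  by [].
rewrite -[X in lin_span _ X]addr0; apply: lin_span_comb; last exact: lin_span0.
by apply: lin_span_sub; do 2 eexists.
Qed.

Variables (p q : nat) (A : 'I_p -> vT) (a : 'I_p -> R) (B : 'I_q -> vT) (b : 'I_q -> R).
Hypotheses (sA : forall i, (A i)^T = A i) (sB : forall i, (B i)^T = B i).

Definition Uset (Xb : vT) :=
  null_of (lmap A) `&`
  null_of (fun X => proj_off (supp (fun i => (lmap B Xb i - b i)%R)) (lmap B X)) `&`
  lin_span (gens Xb).

Lemma Uset_iff Xb X : Uset Xb X <-> X \in Uv Xb A B b.
Proof.
rewrite /Uset /Uv; split.
  move=> [[[sX HA] [_ HB]] /gens_Gv XG]; apply/memv_capP; split => //.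
  apply/orth_ABv; split => // i; first by have := congr1 (fun f => f i) HA.
  move=> ai; have := congr1 (fun f => f i) HB; rewrite /proj_off /supp asboolb.
  by rewrite -/(act Xb B b i) ai.
move=> /memv_capP [XG /orth_ABv [sX HA HB]]; split; last exact/gens_Gv.
split; split => //; apply: boolp.funext => i /=; first exact: HA.
rewrite /proj_off /supp asboolb -/(act Xb B b i).
by case ai: (act Xb B b i) => //=; apply: HB.
Qed.

Lemma dimU Xb : dim_set (Uset Xb) = \dim (Uv Xb A B b).
Proof.
apply: dim_setE => [x /Uset_iff //|v vU].
by apply: lin_span_sub; apply/Uset_iff.
Qed.

Lemma dimN Xb : (exists X0, feas A a B b X0 /\ pd X0) -> feas A a B b Xb ->
  dim_set (normal_cone (feas A a B b) Xb) = (\dim (Symv R n) - \dim (Uv Xb A B b))%N.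
Proof.
move=> [X0 [fX0 pX0]] fX; have sXb : Xb^T = Xb by case: fX => [[]].
rewrite -dim_Wv //; apply: dim_setE => [Y|Y].
  exact: (N_sub fX fX0 pX0).
exact: (Wv_span sXb sA sB fX).
Qed.

End GenE.


Section GenF.
Variable R : realType.
Variable n : nat.
Local Notation vT := 'M[R]_n.
Local Notation vC := 'cV[R]_n.

Lemma mx11_ip (u v : vC) : u^T *m v = (ip u v)%:M.
Proof. by rewrite [LHS]mx11_scalar /ip trace_mx11. Qed.

Variable x : vC.
Hypothesis xn0 : x != 0.

Definition Lf (w : vC) : vT := x *m w^T + w *m x^T.
Lemma Lf_lin : forall c u v, Lf (c *: u + v) = c *: Lf u + Lf v.
Proof.
move=> c u v; rewrite /Lf trD trZ mulmxDr mulmxDl -scalemxAr -scalemxAl scalerDr.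
by rewrite addrACA.
Qed.
Lemma LfE w : linfun Lf w = Lf w.
Proof. exact: (lfunE' Lf_lin). Qed.

Lemma ipL (M : vT) w : M^T = M -> ip M (Lf w) = 2 * ip (M *m x) w.
Proof.
move=> sM; rewrite /Lf ipDr.
have e1 : ip M (x *m w^T) = ip (M *m x) w.
  rewrite [ip (M *m x) w]ipC.
  by rewrite /ip sM mulmxA mxtrace_mulC.
have e2 : ip M (w *m x^T) = ip (M *m x) w.
  by rewrite /ip sM mulmxA mxtrace_mulC trmx_mul sM mulmxA.
by rewrite e1 e2; ring.
Qed.

Local Notation Xb := (x *m x^T).
Let s := ip x x.
Lemma s_gt0 : 0 < s.
Proof.
rewrite lt_def ipxx_ge0 andbT; apply/eqP => /ipxx_eq0 h.
by move: xn0; rewrite h eqxx.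
Qed.

Lemma xTx : x^T *m x = s%:M.
Proof. exact: mx11_ip. Qed.

Lemma Lf_psi w : Lf w = psi Xb (s^-1 *: (x *m w^T)).
Proof.
have sn0 : s != 0 by rewrite gt_eqF // s_gt0.
rewrite /psi /Lf trZ trmx_mul trmxK -scalemxAr -scalemxAl.
have h1 : Xb *m (x *m w^T) = s *: (x *m w^T).
  by rewrite -mulmxA (mulmxA x^T) xTx mul_scalar_mx -scalemxAr.
have h2 : w *m x^T *m Xb = s *: (w *m x^T).
  by rewrite mulmxA -(mulmxA w) xTx mul_mx_scalar scalemxAl.
by rewrite h1 h2 !scalerA mulVf // !scale1r.
Qed.

Variables (p q : nat) (A : 'I_p -> vT) (a : 'I_p -> R) (B : 'I_q -> vT) (b : 'I_q -> R).
Hypotheses (sA : forall i, (A i)^T = A i) (sB : forall i, (B i)^T = B i).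

Definition ts := [seq A i *m x | i <- enum 'I_p] ++ [seq B i *m x | i <- enum 'I_q & act Xb B b i].
Definition TV : {vspace vC} := <<ts>>%VS.
Definition OTv := orthv fullv TV.

Lemma OTv_iff w : w \in OTv <->
  (forall i, ip (A i *m x) w = 0) /\ (forall i, act Xb B b i -> ip (B i *m x) w = 0).
Proof.
split.
  move=> /memv_orth [_ H]; split => [i|i ai]; apply: H; apply: memv_span.
    by rewrite mem_cat; apply/orP; left; apply/mapP; exists i; rewrite ?mem_enum.
  by rewrite mem_cat; apply/orP; right; apply/mapP; exists i => //; rewrite mem_filter ai mem_enum.
move=> [HA HB]; apply/memv_orth; split; first exact: memvf.
apply: ip_seq => y; rewrite mem_cat => /orP [/mapP [i _ ->]|/mapP [i]] //.
by rewrite mem_filter => /andP [ai _] ->; apply: HB.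
Qed.

Lemma Uv_img : Uv Xb A B b = (linfun Lf @: OTv)%VS.
Proof.
apply/vspaceP => Z; apply/idP/idP.
  move=> /memv_capP [/memv_Gv [M ->] /orth_ABv [sZ HA HB]].
  have e : psi Xb M = Lf (M^T *m x).
    by rewrite /psi /Lf trmx_mul trmxK mulmxA mulmxA.
  rewrite e -LfE; apply: memv_img; apply/OTv_iff; split.
    move=> i; have := HA i; rewrite e ipL // => h; lra.
  move=> i ai; have := HB i ai; rewrite e ipL // => h; lra.
move=> /memv_imgP [w /OTv_iff [HA HB] ->]; rewrite LfE.
apply/memv_capP; split; first by apply/memv_Gv; eexists; exact: Lf_psi.
apply/orth_ABv; split.
- by rewrite /Lf trD !trmx_mul !trmxK addrC.
- by move=> i; rewrite ipL // HA mulr0.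
- by move=> i ai; rewrite ipL // HB // mulr0.
Qed.

Lemma Lf_ker : lker (linfun Lf) = 0%VS.
Proof.
apply/eqP; rewrite -subv0; apply/subvP => w; rewrite memv_ker LfE memv0 => /eqP h.
have sn0 : s != 0 by rewrite gt_eqF // s_gt0.
have e : (ip w x) *: x + s *: w = 0.
  have := congr1 (fun M => M *m x) h; rewrite /Lf mul0mx mulmxDl -!mulmxA !mx11_ip.
  by rewrite !mul_mx_scalar.
have := congr1 (ip x) e; rewrite ip0r ipDr !ipZr -/s [ip x w]ipC => e2.
have al : ip w x = 0.
  have : ip w x * (2 * s) = 0 by rewrite -e2; ring.
  by move=> /eqP; rewrite mulf_eq0 mulf_eq0 pnatr_eq0 (negbTE sn0) /= orbF => /eqP.
by move: e; rewrite al scale0r add0r => /eqP; rewrite scaler_eq0 (negbTE sn0).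
Qed.

Lemma dim_Uv_OTv : \dim (Uv Xb A B b) = \dim OTv.
Proof. by rewrite Uv_img limg_dim_eq // Lf_ker capv0. Qed.

End GenF.


Unset Implicit Arguments. Set Strict Implicit. Set Printing Implicit Defensive.

Theorem theorem2p9 (R : realType) (n p q : nat)
  (A : 'I_p -> 'M[R]_n) (a : 'I_p -> R)
  (B : 'I_q -> 'M[R]_n) (b : 'I_q -> R) :
  (forall i, (A i)^T = A i) -> (forall i, (B i)^T = B i) ->
  (exists X0, feas A a B b X0 /\ pd X0) ->
  (forall Xbar : 'M[R]_n, feas A a B b Xbar ->
     dim_set (normal_cone (feas A a B b) Xbar) =
     (dim_set (@Sym R n) -
      dim_set (null_of (lmap A) `&`
               null_of (fun X => proj_off (supp (fun i => (lmap B Xbar i - b i)%R))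
                                          (lmap B X)) `&`
               lin_span (gens Xbar)))%N)
  /\
  (forall xbar : 'cV[R]_n, xbar != 0 -> feas A a B b (xbar *m xbar^T) ->
     let T : set 'cV[R]_n :=
       [set y | (exists i, y = A i *m xbar) \/
                (exists i, ~ supp (fun j => (lmap B (xbar *m xbar^T) j - b j)%R) i
                           /\ y = B i *m xbar)] in
     dim_set (normal_cone (feas A a B b) (xbar *m xbar^T)) =
       (dim_set (@Sym R n) - dim_set (orth T))%N
     /\
     (is_vertex (feas A a B b) (xbar *m xbar^T) <->
      lin_span T = setT)).
Proof.
move=> sA sB Sl; split.
  move=> Xb fX; rewrite (dimN sA sB Sl fX) dimSym.
  by rewrite -(dimU A B b Xb).
move=> x xn0 fX T.
set Xb := x *m x^T.
have key : dim_set (normal_cone (feas A a B b) Xb) = (\dim (Symv R n) - \dim (OTv x A B b))%N.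
  by rewrite (dimN sA sB Sl fX) (dim_Uv_OTv xn0 b sA sB).
have Tts y : T y <-> y \in ts x A B b.
  rewrite /T /ts /= mem_cat; split.
    move=> [[i ->]|[i [hi ->]]]; apply/orP; [left|right]; apply/mapP; exists i => //.
      by rewrite mem_enum.
    rewrite mem_filter mem_enum andbT /act.
    by move: hi; rewrite /supp /=; case: eqP.
  move=> /orP [/mapP [i _ ->]|/mapP [i]]; first by left; exists i.
  rewrite mem_filter => /andP [ai _] ->; right; exists i; split => //.
  by move: ai; rewrite /act /supp /= => ->.
have OTT v : orth T v <-> v \in OTv x A B b.
  rewrite /OTv; split.
    move=> h; apply/memv_orth; split; first exact: memvf.
    move=> y; rewrite /TV => yts.
    apply: (ip_seq _ yts) => z /Tts /h; rewrite ipC /ip trace_mx11 => ->.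
    by [].
  move=> /memv_orth [_ h] t /Tts tts.
  have := h t (memv_span tts); rewrite ipC /ip trace_mx11 => ->.
  by [].
have eOT : dim_set (orth T) = \dim (OTv x A B b).
  apply: dim_setE => [v /OTT //|v vO]; apply: lin_span_sub; exact/OTT.
have LT v : lin_span T v <-> v \in TV x A B b.
  split.
    move=> [s [sT vs]]; apply: (subvP _ _ vs); apply/span_subvP => y /sT /Tts.
    exact: memv_span.
  by move=> vT; exists (ts x A B b); split => // y /Tts.
have dle : (\dim (OTv x A B b) <= \dim (Symv R n))%N.
  by rewrite -(dim_Uv_OTv xn0 b sA sB) dimvS // Uv_Sym // trmx_mul trmxK.
have hOT := dim_orth (subvf (TV x A B b)).
rewrite -/(OTv x A B b) in hOT.
split; first by rewrite key dimSym eOT.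
split.
  move=> [_ h]; rewrite key dimSym in h.
  have d0 : \dim (OTv x A B b) = 0%N by lia.
  have TVf : TV x A B b = fullv.
    apply/eqP; rewrite eqEdim subvf /=; lia.
  apply/seteqP; split => v _ //=; apply/LT; by rewrite TVf memvf.
move=> h; split => //; rewrite key dimSym.
have TVf : TV x A B b = fullv.
  apply/vspaceP => v; rewrite memvf; apply/LT; by rewrite h.
rewrite TVf in hOT.
have -> : \dim (OTv x A B b) = 0%N by lia.
by rewrite subn0.
Qed.
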